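(* Let $E$ be a Banach space with $E = V \oplus W$ ($V, W$ linear subspaces), and let $\Phi\colon E \to \mathbb{R}$ be locally Lipschitz. For $w \in W$ set $\varphi(w) = \sup_{g \in V} \Phi(g+w)$ and $V(w) = \{ v \in V : \Phi(v+w) = \max_{g \in V} \Phi(g+w) \}$. Assume: (a) $V(w) \neq \varnothing$ for every $w \in W$; (b) $\varphi\colon W \to \mathbb{R}$ is bounded below and attains its minimum at some $\overline{w} \in W$; and assume moreover that the multivalued mapping $T\colon W \to 2^V$, $T(w) = V(w)$, is lower semi-continuous and that $T(w)$ is convex for every $w \in W$. Then there exists a continuous map $s\colon W\to V$ with $s(w)\in V(w)$ for all $w$, and $\overline{u} = s(\overline{w}) + \overline{w}$ is a critical point of $\Phi$ (i.e. $0 \in \partial\Phi(\overline{u})$) with $$\Phi(\overline{u}) = \min_{w \in W} \max_{v \in V} \Phi(v+w).$$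
   Context: A multivalued mapping $T\colon W \to 2^V$ is lower semi-continuous if for every open set $A \subset V$ the set $\{w \in W : T(w) \cap A \neq \varnothing\}$ is open in $W$. For a locally Lipschitz $\Phi$, $\Phi^\circ(x;v) = \limsup_{y \to x,\, t \downarrow 0} \frac{\Phi(y+tv) - \Phi(y)}{t}$ and the Clarke subdifferential is $\partial\Phi(x) = \{x^* \in E^* : \Phi^\circ(x;v) \ge \langle x^*, v\rangle \ \forall v \in E\}$; $x$ is a critical point if $0 \in \partial\Phi(x)$. *)

(* Defs.v *)
From HB Require Import structures.
From mathcomp Require Import all_boot all_order all_algebra.
From mathcomp Require Import all_classical all_reals all_analysis.
Set Implicit Arguments. Unset Strict Implicit. Unset Printing Implicit Defensive.
Import Order.TTheory GRing.Theory Num.Theory.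
Import numFieldNormedType.Exports.
Local Open Scope classical_set_scope.
Local Open Scope ring_scope.

Section Defs.
Context {R : realType} {E : normedModType R}.

Definition is_subspace (S : set E) : Prop :=
  S 0 /\ (forall a x y, S x -> S y -> S (a *: x + y)).

Definition direct_sum (V W : set E) : Prop :=
  is_subspace V /\ is_subspace W /\ closed V /\ closed W /\
  (forall u : E, exists v w, V v /\ W w /\ u = v + w) /\
  (forall x, V x -> W x -> x = 0).

Definition locally_lipschitz (Phi : E -> R) : Prop :=
  forall x : E, exists r : R, exists L : R, 0 < r /\
    forall y z, ball x r y -> ball x r z -> `|Phi y - Phi z| <= L * `|y - z|.

Definition phi_sup (Phi : E -> R) (V : set E) (w : E) : \bar R :=
  ereal_sup [set (Phi (g + w))%:E | g in V].

Definition Vmax (Phi : E -> R) (V : set E) (w : E) : set E :=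
  [set v | V v /\ forall g, V g -> Phi (g + w) <= Phi (v + w)].

Definition convex_subset (S : set E) : Prop :=
  forall x y (t : R), S x -> S y -> 0 <= t -> t <= 1 ->
    S (t *: x + (1 - t) *: y).

(* lower semi-continuity of T : W -> 2^V (subspace topologies) *)
Definition lsc_multi (W V : set E) (T : E -> set E) : Prop :=
  forall A : set E, (exists O : set E, open O /\ A = O `&` V) ->
    exists O' : set E, open O' /\
      [set w | W w /\ (T w `&` A) !=set0] = O' `&` W.

(* Clarke generalized directional derivative
   Phi°(x;v) = limsup_{y -> x, t downarrow 0} (Phi(y + t v) - Phi(y)) / t
             = inf_{delta > 0} sup { quotient | y in ball x delta, 0 < t < delta } *)
Definition clarke_dd (Phi : E -> R) (x v : E) : \bar R :=
  ereal_inf [set ereal_sup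
      [set ((Phi (yt.1 + yt.2 *: v) - Phi yt.1) / yt.2)%:E
         | yt in [set yt : E * R | ball x delta yt.1 /\ 0 < yt.2 < delta]]
    | delta in [set d : R | 0 < d]].

Definition clarke_subdiff (Phi : E -> R) (x : E) : set (E -> R) :=
  [set xs | (forall (a : R) (u w : E), xs (a *: u + w) = a * xs u + xs w) /\
            continuous xs /\
            (forall v : E, (xs v)%:E <= clarke_dd Phi x v)%E].

Definition critical_point (Phi : E -> R) (x : E) : Prop :=
  clarke_subdiff Phi x (fun _ => 0).

End Defs.

(* Main.v *)
Require Import Defs.
From HB Require Import structures.
From mathcomp Require Import all_boot all_order all_algebra.
From mathcomp Require Import all_classical all_reals all_analysis.
From mathcomp Require Import ring lra wochoice.
Import Order.TTheory GRing.Theory Num.Theory.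
Import numFieldNormedType.Exports.
Local Open Scope classical_set_scope.
Local Open Scope ring_scope.
Section A.
Context {R : realType}.
Definition hp (k : nat) : R := (2^-1) ^+ k.
Lemma hp_gt0 k : 0 < hp k.
Proof. by rewrite /hp exprn_gt0 // invr_gt0. Qed.
Lemma hpS k : hp k.+1 = hp k / 2.
Proof. by rewrite /hp exprSr. Qed.
Lemma hp_small e : 0 < e -> exists k, hp k < e.
Proof.
move=> e0.
have : `|(2^-1 : R)| < 1 by rewrite ger0_norm ?invr_ge0 // invf_lt1 // ltr1n.
move=> /(cvg_geometric 1) /cvgrPdist_lt /(_ e e0) [N _ HN].
exists N; have := HN N (leqnn N); rewrite /= /geometric mul1r sub0r normrN.
by rewrite ger0_norm // ltW // hp_gt0.
Qed.
End A.
Section Cont.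
Context {R : realType} {E F : normedModType R}.
Definition cont (W : set E) (f : E -> F) := forall x, W x -> forall e, 0 < e ->
  exists2 d, 0 < d & forall y, W y -> `|x - y| < d -> `|f x - f y| < e.
Lemma cont_within W f : cont W f -> {within W, continuous f}.
Proof.
move=> cf; apply/subspace_continuousP => x Wx.
apply/cvgrPdist_lt => e e0; have [d d0 H] := cf x Wx e e0.
rewrite /= /within /=; apply/nbhs_ballP; exists d => //= y.
rewrite -ball_normE /= => xy Wy; exact: H.
Qed.
End Cont.

Section ULim.
Context {R : realType} {E : normedModType R} {F : completeNormedModType R}.

Lemma tail_bound (u : nat -> F) c :
  (forall n, `|u n.+1 - u n| <= c * hp n) ->
  forall n j, `|u (n + j)%N - u n| <= 2 * c * (hp n - hp (n + j)).
Proof.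
move=> H n; elim=> [|j IH]; first by rewrite addn0 subrr normr0 subrr mulr0.
rewrite addnS (_ : u (n + j).+1 - u n = (u (n + j).+1 - u (n+j)%N) + (u (n + j)%N - u n)); last first.
  by rewrite addrA subrK.
apply: le_trans (ler_normD _ _) _.
rewrite [X in _ <= X](_ : _ = c * hp (n + j) + 2 * c * (hp n - hp (n + j))).
  exact: lerD.
by rewrite hpS; field.
Qed.

Lemma ulim (W : set E) (u : nat -> E -> F) c : 0 <= c ->
  (forall n, cont W (u n)) -> (forall n x, W x -> `|u n.+1 x - u n x| <= c * hp n) ->
  exists g : E -> F, [/\ cont W g,
    (forall n x, W x -> `|g x - u n x| <= 2 * c * hp n) &
    (forall x, W x -> u ^~ x @ \oo --> g x)].
Proof.
move=> c0 cu du.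
have tb x n m : W x -> (n <= m)%N -> `|u m x - u n x| <= 2 * c * hp n.
  move=> Wx nm; rewrite -(subnKC nm).
  have := @tail_bound (u ^~ x) c (fun k => du k x Wx) n (m - n); move=> h; apply: le_trans h _.
  by rewrite ler_wpM2l ?mulr_ge0 // lerBlDr lerDl ltW // hp_gt0.
have small e : 0 < e -> exists k, 2 * c * hp k < e.
  move=> e0; have c1 : 0 < 2 * c + 1 by apply: ltr_wpDl => //; rewrite mulr_ge0.
  have [k hk] := @hp_small R (e / (2 * c + 1)) (divr_gt0 e0 c1).
  exists k; apply: le_lt_trans (_ : (2 * c + 1) * hp k < e).
    by rewrite ler_wpM2r ?lerDl // ltW // hp_gt0.
  by rewrite mulrC -ltr_pdivlMr.
have cv x : W x -> cvg (u ^~ x @ \oo).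
  move=> Wx; apply: (@cauchy_cvg _ (u ^~ x @ \oo) _); apply/cauchyP => e e0.
  have [k hk] := small e e0; exists (u k x); exists k => // m /= km.
  rewrite -ball_normE /= distrC; exact: le_lt_trans (tb x k m Wx km) hk.
pose g x := lim (u ^~ x @ \oo).
have gb n x : W x -> `|g x - u n x| <= 2 * c * hp n.
  move=> Wx; apply/ler_addgt0Pr => e e0.
  have := cv x Wx; move=> /cvgr_dist_lt /(_ e e0) [N _ HN].
  have := HN (n + N)%N (leq_addl _ _); rewrite /= -/(g x) => h.
  rewrite (_ : g x - u n x = (g x - u (n + N)%N x) + (u (n + N)%N x - u n x)); last first.
    by rewrite addrA subrK.
  apply: le_trans (ler_normD _ _) _; rewrite addrC; apply: lerD; last exact: ltW.
  by apply: tb => //; exact: leq_addr.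
have gc : cont W g.
move=> x Wx e e0.
have e30 : 0 < e / 3 by rewrite divr_gt0.
have [k hk] := small _ e30; have [d d0 hd] := cu k x Wx _ e30.
exists d => // y Wy xy.
rewrite (_ : g x - g y = (g x - u k x) + (u k x - u k y) + (u k y - g y)); last first.
  by rewrite !addrA subrK addrNK.
apply: le_lt_trans (ler_normD _ _) _.
rewrite (_ : e = e / 3 + e / 3 + e / 3); last by field.
apply: ler_ltD; last by rewrite distrC; exact: le_lt_trans (gb k y Wy) hk.
apply: le_trans (ler_normD _ _) _; apply: lerD; last exact/ltW/hd.
exact/ltW/(le_lt_trans (gb k x Wx) hk).
by exists g; split => // x Wx; exact: cv.
Qed.
End ULim.

Section Helpers.
Context {R : realType} {E F : normedModType R}.
Implicit Types W : set E.

Lemma cont_filter W (f : E -> F) :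
  cont W f <-> forall x, W x -> f @ within W (nbhs x) --> f x.
Proof.
split.
  move=> cf x Wx; apply/cvgrPdist_lt => e e0; have [d d0 H] := cf x Wx e e0.
  rewrite /= /within /=; apply/nbhs_ballP; exists d => //= y.
  rewrite -ball_normE /= => xy Wy; exact: H.
move=> H x Wx e e0; have := H x Wx; move=> /cvgrPdist_lt /(_ e e0).
rewrite /= /within /= => /nbhs_ballP [d /= d0 hd]; exists d => // y Wy xy.
by apply: hd => //; rewrite -ball_normE.
Qed.

Lemma cont_cst W (c : F) : cont W (fun _ => c).
Proof. by move=> x _ e e0; exists 1 => // y _ _; rewrite subrr normr0. Qed.

Lemma contD W (f g : E -> F) : cont W f -> cont W g -> cont W (f \+ g).
Proof.
move=> cf cg x Wx e e0.
have e2 : 0 < e / 2 by rewrite divr_gt0.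
have [d1 d10 h1] := cf x Wx _ e2; have [d2 d20 h2] := cg x Wx _ e2.
exists (Num.min d1 d2); first by rewrite lt_min d10 d20.
move=> y Wy; rewrite lt_min => /andP[y1 y2].
rewrite /= (_ : f x + g x - (f y + g y) = (f x - f y) + (g x - g y)); last first.
  by rewrite opprD addrACA.
apply: le_lt_trans (ler_normD _ _) _; rewrite (splitr e); apply: ltrD.
  exact: h1.
exact: h2.
Qed.

Lemma cont_sum W (u : nat -> E -> F) N : (forall n, cont W (u n)) ->
  cont W (fun x => \sum_(k < N) u k x).
Proof.
move=> cu; elim: N => [|N IH].
  have -> : (fun x => \sum_(k < 0) u k x) = (fun _ => 0).
    by apply/funext => x; rewrite big_ord0.
  exact: cont_cst.
have -> : (fun x => \sum_(k < N.+1) u k x) = (fun x => \sum_(k < N) u k x) \+ u N.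
  by apply/funext => x; rewrite big_ord_recr.
exact: contD.
Qed.

Lemma conv_lt (a b : F) (t e : R) : 0 <= t -> t <= 1 -> `|a| < e -> `|b| < e ->
  `|t *: a + (1 - t) *: b| < e.
Proof.
move=> t0 t1 ha hb; apply: le_lt_trans (ler_normD _ _) _.
have t1' : 0 <= 1 - t by rewrite subr_ge0.
rewrite !normrZ (ger0_norm t0) (ger0_norm t1').
have [->|tlt] := eqVneq t 1; first by rewrite subrr mul0r addr0 mul1r.
have t1'' : 0 < 1 - t by rewrite subr_gt0 lt_neqAle tlt t1.
have h1 : t * `|a| <= t * e by rewrite ler_wpM2l // ltW.
have h2 : (1 - t) * `|b| < (1 - t) * e by rewrite ltr_pM2l.
lra.
Qed.

End Helpers.

Section Sel.
Context {R : realType} {E : completeNormedModType R}.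
Variables (W V : set E).
Hypothesis (sV : is_subspace V) (cV : closed V).

Definition lscp (T : E -> set E) := forall x, W x -> forall z, T x z -> forall e, 0 < e ->
  exists2 d, 0 < d & forall x', W x' -> `|x - x'| < d -> exists2 z', T x' z' & `|z - z'| < e.

Definition goodT (T : E -> set E) := [/\ forall x, W x -> T x !=set0,
  forall x, W x -> convex_subset (T x), lscp T & forall x, W x -> T x `<=` V].

Lemma V0 : V 0. Proof. by case: sV. Qed.
Lemma VD x y : V x -> V y -> V (x + y).
Proof. by case: sV => _ h Vx Vy; have := h 1 x y Vx Vy; rewrite scale1r. Qed.
Lemma VZ a x : V x -> V (a *: x).
Proof. by case: sV => h0 h Vx; have := h a x 0 Vx h0; rewrite addr0. Qed.

Lemma gdist (T : E -> set E) x (e : R) : W x -> goodT T ->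
  convex_subset [set v | V v /\ exists2 z, T x z & `|v - z| < e].
Proof.
move=> Wx [_ Tcv _ _] v1 v2 t [V1 [z1 T1 h1]] [V2 [z2 T2 h2]] t0 t1; split.
  by apply: VD; apply: VZ.
exists (t *: z1 + (1 - t) *: z2); first exact: Tcv.
rewrite (_ : _ - _ = t *: (v1 - z1) + (1 - t) *: (v2 - z2)); last first.
  by rewrite !scalerBr opprD !addrA; congr (_ - _); rewrite addrAC.
exact: conv_lt.
Qed.


Lemma approx_sel {T} : goodT T -> forall eps, 0 < eps ->
  exists f, cont W f /\ forall x, W x -> V (f x) /\ exists2 z, T x z & `|f x - z| < eps.
Proof.
move=> gT; case: (gT) => Tne Tcv Tl TV eps eps0.
pose e2 := eps / 2.
have e20 : 0 < e2 by rewrite divr_gt0.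
pose U y x := [/\ W x, V y & exists2 z, T x z & `|y - z| < e2].
have Uopen y x : U y x -> exists2 d, 0 < d & forall x', W x' -> `|x - x'| < d -> U y x'.
  case=> Wx Vy [z Tz yz].
  have ez : 0 < e2 - `|y - z| by rewrite subr_gt0.
  have [d d0 hd] := Tl x Wx z Tz _ ez.
  exists d => // x' Wx' xx'; have [z' Tz' zz'] := hd x' Wx' xx'.
  split => //; exists z' => //.
  apply: le_lt_trans (ler_distD z _ _) _; lra.
have [Rw wo] := well_ordering_principle E.
have Ranti : antisymmetric Rw.
  have wc : wo_chain Rw predT by move=> A _; exact: wo.
  move=> a b; exact: (wo_chain_antisymmetric wc).
pose a x := xget 0 [set y | U y x /\ forall y', U y' x -> Rw y y'].
have a_spec x : W x -> U (a x) x /\ forall y', U y' x -> Rw (a x) y'.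
  move=> Wx; apply: (xgetPex 0 (P := [set y | U y x /\ forall y', U y' x -> Rw y y'])).
  have [z Tz] := Tne x Wx.
  have Uz : U z x.
    by split; [exact: Wx | exact: (TV x Wx z Tz) | exists z => //; rewrite subrr normr0].
  have [m [[mA mlb] _]] := wo [pred y | `[< U y x >]] (ex_intro _ z (introT (asboolP _) Uz)).
  exists m; split; first by move: mA; rewrite inE /=.
  by move=> y' Uy'; apply: mlb; rewrite inE /=.
pose C n c := W c /\ forall x', W x' -> `|c - x'| < 3 * hp n -> U (a c) x'.
have K n c c' : C n c -> C n c' -> `|c - c'| < 3 * hp n -> a c = a c'.
  move=> [Wc hc] [Wc' hc'] cc'.
  apply: Ranti; apply/andP; split.
    by apply: (a_spec c Wc).2; apply: hc' Wc _; rewrite distrC.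
  exact: (a_spec c' Wc').2 (a c) (hc c' Wc' cc').
pose G n x := [set 0] `|` [set hp n - `|x - c| | c in C n].
pose g n x := sup (G n x).
have Gne n x : G n x !=set0 by exists 0; left.
have Gub n x : ubound (G n x) (hp n).
  move=> _ [-> | [c _ <-]]; first exact: ltW (hp_gt0 n).
  by rewrite lerBlDr lerDl.
have Ghs n x : has_sup (G n x) by split; [exact: Gne | exists (hp n); exact: Gub].
have g0 n x : 0 <= g n x by apply: sup_upper_bound; [exact: Ghs | left].
have gle n x : g n x <= hp n by apply: ge_sup; [exact: Gne | exact: Gub].
have glb n x c : C n c -> hp n - `|x - c| <= g n x.
  by move=> Cc; apply: sup_upper_bound; [exact: Ghs | right; exists c].
have glip n x y : g n x <= g n y + `|x - y|.
  apply: ge_sup; first exact: Gne.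
  move=> _ [-> | [c Cc <-]]; first by rewrite addr_ge0.
  have := glb n y c Cc; have := ler_distD x y c; rewrite (distrC y x); lra.
have gL n x y : `|g n x - g n y| <= `|x - y|.
  rewrite ler_norml; have := glip n x y; have := glip n y x; rewrite (distrC y x).
  move=> h1 h2; apply/andP; split; lra.
have gpos n x : 0 < g n x -> exists c, C n c /\ `|x - c| < hp n.
  move=> gp; case: (pselect (exists c, C n c /\ `|x - c| < hp n)) => // nc; exfalso.
  have : g n x <= 0.
    apply: ge_sup; first exact: Gne.
    move=> _ [-> // | [c Cc <-]].
    rewrite subr_le0 leNgt; apply/negP => h; apply: nc; exists c; split; [exact: Cc | exact: h].
  by move=> /(lt_le_trans gp); rewrite ltxx.
pose yv n x := a (xget 0 [set c | C n c /\ `|x - c| < hp n]).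
have yv_spec n x : 0 < g n x -> exists c, [/\ C n c, `|x - c| < hp n & yv n x = a c].
  move=> /gpos ex; exists (xget 0 [set c | C n c /\ `|x - c| < hp n]).
  by have [h1 h2] := xgetPex 0 ex; split.
have U_yv n x : W x -> 0 < g n x -> U (yv n x) x.
  move=> Wx gp; have [c [[Wc hc] xc ->]] := yv_spec n x gp.
  apply: hc Wx _; rewrite distrC; apply: (lt_trans xc); have := @hp_gt0 R n; lra.
have loc n x : exists ys, forall x', `|x - x'| < hp n / 2 -> 0 < g n x' -> yv n x' = ys.
  case: (pselect (exists x0, `|x - x0| < hp n / 2 /\ 0 < g n x0)) => [[x0 [xx0 gx0]] | nex].
    exists (yv n x0) => x' xx' gx'.
    have [c [Cc xc ->]] := yv_spec n x' gx'; have [c0 [Cc0 xc0 ->]] := yv_spec n x0 gx0.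
    apply: K Cc Cc0 _.
    have t1 := ler_distD x' c c0; have t2 := ler_distD x x' c0; have t3 := ler_distD x0 x c0.
    rewrite (distrC c x') in t1; rewrite (distrC x' x) in t2; lra.
  exists 0 => x' xx' gx'; exfalso; apply: nex; exists x'; split; [exact: xx' | exact: gx'].
have cover x : W x -> exists n, 0 < g n x.
  move=> Wx; have [Ua _] := a_spec x Wx.
  have [d d0 hd] := Uopen _ _ Ua.
  have [n hn] := @hp_small R (d / 3) (divr_gt0 d0 (ltr0n _ 3)).
  exists n; apply: lt_le_trans (glb n x x _).
    by rewrite subrr normr0 subr0; exact: hp_gt0.
  split => // x' Wx' xx'; apply: hd => //; lra.
have D0 (y : E) : 0 < 1 + `|y| by have := normr_ge0 y; lra.
pose th n x := g n x / (1 + `|yv n x|).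
pose q n x := th n x *: yv n x.
have th0 n x : 0 <= th n x by rewrite divr_ge0 // ltW.
have thD n x : th n x * (1 + `|yv n x|) = g n x by rewrite divfK // gt_eqF.
have thle n x : th n x <= hp n.
  have := thD n x; have := gle n x; have := th0 n x; have := normr_ge0 (yv n x); nra.
have qle n x : `|q n x| <= hp n.
  rewrite normrZ ger0_norm //.
  have := thD n x; have := gle n x; have := th0 n x; have := normr_ge0 (yv n x); nra.
have form n x : exists ys, forall x', `|x - x'| < hp n / 2 ->
    th n x' = g n x' / (1 + `|ys|) /\ q n x' = (g n x' / (1 + `|ys|)) *: ys.
  have [ys hys] := loc n x; exists ys => x' xx'.
  case: (eqVneq (g n x') 0) => [gz | gn].
    by rewrite /q /th gz !mul0r !scale0r.
  have gp : 0 < g n x' by rewrite lt_neqAle eq_sym gn g0.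
  by rewrite /q /th (hys x' xx' gp).
have cthq n : cont W (th n) /\ cont W (q n).
  split=> x Wx e e0; have [ys hys] := form n x;
   (have h2 : 0 < @hp R n / 2 by rewrite divr_gt0 ?hp_gt0);
   (exists (Num.min (hp n / 2) e); first by rewrite lt_min e0 h2);
   move=> y Wy; rewrite lt_min => /andP[xy1 xy2];
   (have hxx : `|x - x| < hp n / 2 by rewrite subrr normr0);
   (have [hx1 hx2] := hys x hxx);
   have [hy1 hy2] := hys y xy1.
    have iv : 0 <= (1 + `|ys|)^-1 by rewrite invr_ge0 ltW.
    rewrite hx1 hy1 -mulrBl normrM (ger0_norm iv).
    apply: le_lt_trans xy2; apply: le_trans (gL n x y).
    by rewrite ler_piMr // invf_le1 // lerDl.
  have iv : 0 <= (1 + `|ys|)^-1 by rewrite invr_ge0 ltW.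
  rewrite hx2 hy2 -scalerBl normrZ -mulrBl normrM (ger0_norm iv).
  apply: le_lt_trans xy2; apply: le_trans (gL n x y).
  rewrite -mulrA ler_piMr // mulrC ler_pdivrMr // mul1r; lra.
pose S N x := \sum_(k < N) th k x.
pose Fs N x := \sum_(k < N) q k x.
have cS N : cont W (S N) by apply: cont_sum => n; exact: (cthq n).1.
have cF N : cont W (Fs N) by apply: cont_sum => n; exact: (cthq n).2.
have dS n x : W x -> `|S n.+1 x - S n x| <= 1 * hp n.
  by rewrite /S big_ord_recr /= addrAC subrr add0r mul1r ger0_norm.
have dF n x : W x -> `|Fs n.+1 x - Fs n x| <= 1 * hp n.
  by rewrite /Fs big_ord_recr /= addrAC subrr add0r mul1r.
have [Sl [cSl _ limS]] := ulim W S 1 ler01 cS dS.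
have [Fl [cFl _ limF]] := ulim W Fs 1 ler01 cF dF.
have Sge n N x : (n < N)%N -> th n x <= S N x.
  move=> nN; rewrite /S (bigD1 (Ordinal nN)) //= lerDl.
  by apply: sumr_ge0 => i _; exact: th0.
have thpos n x : 0 < g n x -> 0 < th n x by move=> gp; rewrite divr_gt0.
have Spos x : W x -> 0 < Sl x.
  move=> Wx; have [n gp] := cover x Wx.
  apply: lt_le_trans (thpos n x gp) _; apply: (cvgr_to_ge (limS x Wx)).
  by exists n.+1 => // N /= nN; exact: Sge.
pose f x := (Sl x)^-1 *: Fl x.
have cf : cont W f.
  apply/cont_filter => x Wx.
  have hS := (cont_filter W Sl).1 cSl x Wx; have hF := (cont_filter W Fl).1 cFl x Wx.
  apply: cvgZ; last exact: hF.
  apply: cvgV; last exact: hS.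
  by rewrite gt_eqF // Spos.
exists f; split => // x Wx.
pose Kx := [set v | V v /\ exists2 z, T x z & `|v - z| < e2].
have Kc : convex_subset Kx := gdist T x e2 Wx gT.
have ind N : (S N x = 0 /\ Fs N x = 0) \/ (0 < S N x /\ Kx ((S N x)^-1 *: Fs N x)).
  elim: N => [|N IH]; first by left; rewrite /S /Fs !big_ord0.
  have eS : S N.+1 x = S N x + th N x by rewrite /S big_ord_recr.
  have eF : Fs N.+1 x = Fs N x + th N x *: yv N x by rewrite /Fs big_ord_recr.
  rewrite eS eF.
  case: (eqVneq (th N x) 0) => [->|thn]; first by rewrite addr0 scale0r addr0.
  have thp : 0 < th N x by rewrite lt_neqAle eq_sym thn th0.
  have gp : 0 < g N x by rewrite -thD mulr_gt0.
  have [_ VY [z Tz hz]] := U_yv N x Wx gp.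
  have KY : Kx (yv N x) by split => //; exists z.
  right; case: IH => [[-> ->] | [Sp KS]].
    by rewrite !add0r scalerA mulVf ?gt_eqF // scale1r.
  split; first by rewrite addr_gt0.
  set s := S N x; set t := th N x.
  have sn : s != 0 by rewrite gt_eqF.
  have stn : s + t != 0 by rewrite gt_eqF // addr_gt0.
  have -> : (s + t)^-1 *: (Fs N x + t *: yv N x) =
      (s / (s + t)) *: (s^-1 *: Fs N x) + (1 - s / (s + t)) *: yv N x.
    rewrite scalerDr !scalerA; congr (_ *: _ + _ *: _); field; rewrite ?sn ?stn //.
  apply: Kc => //; first by rewrite divr_ge0 // ltW // addr_gt0.
  by rewrite ler_pdivrMr ?addr_gt0 // mul1r lerDl ltW.
have [n gp] := cover x Wx.
have rc : (fun N => (S N x)^-1 *: Fs N x) @ \oo --> f x.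
  apply: cvgZ; last exact: limF x Wx.
  apply: cvgV; last exact: limS x Wx.
  by rewrite gt_eqF // Spos.
have evK N : (n < N)%N -> Kx ((S N x)^-1 *: Fs N x).
  move=> nN; have SN : 0 < S N x := lt_le_trans (thpos n x gp) (Sge n N x nN).
  by case: (ind N) => [[h _]|[_ h]] //; rewrite h ltxx in SN.
have ev : \forall N \near \oo, V ((S N x)^-1 *: Fs N x).
  by exists n.+1 => // N /= nN; exact: (evK N nN).1.
split.
  exact: (@closed_cvg nat E \oo _ (fun N => (S N x)^-1 *: Fs N x) V cV ev (f x) rc).
have := rc; move=> /cvgr_dist_lt /(_ e2 e20) [N0 _ HN].
pose N := maxn N0 n.+1.
have [_ [z Tz hz]] := evK N (leq_maxr N0 n.+1).
exists z => //.
have h1 := HN N (leq_maxl N0 n.+1).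
apply: le_lt_trans (ler_distD ((S N x)^-1 *: Fs N x) _ _) _.
rewrite (splitr eps); exact: ltrD h1 hz.
Qed.

Lemma good_step {T} {g : E -> E} {e} : goodT T -> cont W g -> 0 < e ->
  (forall x, W x -> exists2 z, T x z & `|g x - z| < e) ->
  goodT (fun x => [set z | T x z /\ `|g x - z| < e]).
Proof.
move=> [Tne Tcv Tl TV] cg e0 hg; split.
- by move=> x Wx; have [z Tz hz] := hg x Wx; exists z.
- move=> x Wx z1 z2 t [T1 h1] [T2 h2] t0 t1; split; first exact: Tcv.
  have e1 : t + (1 - t) = 1 by rewrite addrC subrK.
  rewrite (_ : g x - _ = t *: (g x - z1) + (1 - t) *: (g x - z2)); first exact: conv_lt.
  by rewrite !scalerBr addrACA -scalerDl e1 scale1r opprD.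
- move=> x Wx z [Tz hz] e' e'0.
  pose m := e - `|g x - z|.
  have m0 : 0 < m by rewrite subr_gt0.
  have m2 : 0 < m / 2 by rewrite divr_gt0.
  have mm : 0 < Num.min e' (m / 2) by rewrite lt_min e'0 m2.
  have [d1 d10 h1] := Tl x Wx z Tz _ mm.
  have [d2 d20 h2] := cg x Wx _ m2.
  exists (Num.min d1 d2); first by rewrite lt_min d10 d20.
  move=> x' Wx'; rewrite lt_min => /andP[xd1 xd2].
  have [z' Tz' zz'] := h1 x' Wx' xd1.
  move: zz'; rewrite lt_min => /andP[zz1 zz2].
  exists z' => //; split => //.
  have hgx := h2 x' Wx' xd2.
  have t1 := ler_distD (g x) (g x') z'; have t2 := ler_distD z (g x) z'.
  rewrite (distrC (g x') (g x)) in t1; rewrite /m in zz2 hgx; lra.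
- by move=> x Wx z [Tz _]; exact: TV Tz.
Qed.

Lemma michael T : goodT T -> (forall x, W x -> closed (T x)) ->
  exists s, cont W s /\ forall x, W x -> T x (s x).
Proof.
move=> gT Tcl.
pose P k (f : E -> E) := cont W f /\
  forall x, W x -> V (f x) /\ exists2 z, T x z & `|f x - z| < hp k.
have [f0 P0] : exists f, P 0%N f := approx_sel gT _ (@hp_gt0 R 0).
have Pstep k f : P k f -> exists f', P k.+1 f' /\
    forall x, W x -> `|f' x - f x| <= 2 * hp k.
  move=> [cf hf].
  have gT' := good_step gT cf (@hp_gt0 R k) (fun x Wx => (hf x Wx).2).
  have [f' [cf' hf']] := approx_sel gT' _ (@hp_gt0 R k.+1).
  exists f'; split.
    split => // x Wx; have [Vf [z [Tz _] hz]] := hf' x Wx; split => //; by exists z.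
  move=> x Wx; have [_ [z [Tz hz1] hz2]] := hf' x Wx.
  have t1 := ler_distD z (f' x) (f x); rewrite (distrC z (f x)) in t1.
  have := hpS (R := R) k; have := @hp_gt0 R k; lra.
have [st hst] : exists st : nat -> (E -> E) -> (E -> E), forall k f, P k f ->
    P k.+1 (st k f) /\ forall x, W x -> `|st k f x - f x| <= 2 * hp k.
  have := @choice (nat * (E -> E))%type (E -> E) (fun kf f' => P kf.1 kf.2 ->
    P kf.1.+1 f' /\ forall x, W x -> `|f' x - kf.2 x| <= 2 * hp kf.1).
  case.
    move=> [k f] /=; case: (pselect (P k f)) => [Pf | nPf].
      by have [f' hf'] := Pstep k f Pf; exists f'.
    by exists f.
  move=> st hst; exists (fun k f => st (k, f)) => k f Pf; exact: (hst (k, f) Pf).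
pose u := fix u k := match k with 0%N => f0 | k'.+1 => st k' (u k') end.
have Pu k : P k (u k) by elim: k => [|k IH] //=; exact: (hst k _ IH).1.
have du n x : W x -> `|u n.+1 x - u n x| <= 2 * hp n.
  by move=> Wx; exact: (hst n _ (Pu n)).2 x Wx.
have [s [cs sb _]] := ulim W u 2 (ler0n _ 2) (fun k => (Pu k).1) du.
exists s; split => // x Wx; apply: (Tcl x Wx) => B /nbhs_ballP [e /= e0 hB].
have [k hk] := @hp_small R (e / 5) (divr_gt0 e0 (ltr0n _ 5)).
have [_ [z Tz hz]] := (Pu k).2 x Wx.
exists z; split => //; apply: hB; rewrite -ball_normE /=.
have := sb k x Wx; have := ler_distD (u k x) (s x) z; have := @hp_gt0 R k; lra.
Qed.
End Sel.

Theorem corollary9 (R : realType) (E : completeNormedModType R)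
  (V W : set E) (Phi : E -> R) (wbar : E)
  (hVW : direct_sum V W)
  (hPhi : locally_lipschitz Phi)
  (ha : forall w, W w -> Vmax Phi V w !=set0)
  (hb_fin : forall w, W w -> phi_sup Phi V w \is a fin_num)
  (hb_bdd : exists m : R, forall w, W w -> (m%:E <= phi_sup Phi V w)%E)
  (hb_min : W wbar /\ forall w, W w -> (phi_sup Phi V wbar <= phi_sup Phi V w)%E)
  (hlsc : lsc_multi W V (Vmax Phi V))
  (hconv : forall w, W w -> convex_subset (Vmax Phi V w)) :
  exists s : E -> E,
    {within W, continuous s} /\
    (forall w, W w -> Vmax Phi V w (s w)) /\
    critical_point Phi (s wbar + wbar) /\
    ((forall w, W w -> ((Phi (s wbar + wbar))%:E <= phi_sup Phi V w)%E) /\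
     exists w, W w /\ (Phi (s wbar + wbar))%:E = phi_sup Phi V w).
Proof.
case: hVW => sV [sW [cV [cW [dec tr]]]].
case: hb_min => Wwbar hmin.
pose T := Vmax Phi V.
have Pc p e : 0 < e -> exists2 d, 0 < d & forall y, `|p - y| < d -> `|Phi p - Phi y| < e.
  move=> e0; have [r [L [r0 hL]]] := hPhi p.
  have L1 : 0 < `|L| + 1 by have := normr_ge0 L; lra.
  exists (Num.min r (e / (`|L| + 1))); first by rewrite lt_min r0 divr_gt0.
  move=> y; rewrite lt_min => /andP[pr pe].
  have bpy : ball p r y by rewrite -ball_normE.
  have := hL p y (ballxx _ r0) bpy.
  have h1 : `|p - y| * (`|L| + 1) < e by rewrite -ltr_pdivlMr.
  have := ler_norm L; have := normr_ge0 (p - y); nra.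
have Tcl w : W w -> closed (T w).
  move=> Ww v cl; split.
    by apply: cV; apply: (closureS _ cl) => z [].
  move=> g Vg; rewrite leNgt; apply/negP => lt.
  have gap : 0 < Phi (g + w) - Phi (v + w) by rewrite subr_gt0.
  have [d d0 hd] := Pc (v + w) _ gap.
  have [v' [[_ hv'] bv']] := cl (ball v d) (nbhsx_ballx _ _ d0).
  have := hv' g Vg; have := hd (v' + w).
  move: bv'; rewrite -ball_normE /= => bv'.
  rewrite opprD addrACA subrr addr0; move=> /(_ bv').
  have := ler_norm (Phi (v' + w) - Phi (v + w)); rewrite distrC; lra.
have Tl : lscp W T.
  move=> x Wx z Tz e e0.
  have [Op [oOp eq]] := hlsc (ball z e `&` V) (ex_intro _ (ball z e) (conj (ball_open z e) erefl)).
  have : (Op `&` W) x.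
    rewrite -eq; split => //; exists z; split => //; split; first exact: ballxx.
    by case: Tz.
  case=> Opx _.
  have := open_nbhs_nbhs (conj oOp Opx); move=> /nbhs_ballP [d /= d0 hd].
  exists d => // x' Wx' xx'.
  have : [set w | W w /\ (T w `&` (ball z e `&` V)) !=set0] x'.
    by rewrite eq; split => //; apply: hd; rewrite -ball_normE.
  case=> _ [z' [Tz' [bz' _]]]; exists z' => //; by move: bz'; rewrite -ball_normE /=.
have gT : goodT W V T.
  by split => // x Wx z [].
have [s [cs hs]] := @michael R E W V sV cV T gT Tcl.
have phiE w v : Vmax Phi V w v -> phi_sup Phi V w = (Phi (v + w))%:E.
  move=> [Vv hv]; apply/eqP; rewrite eq_le; apply/andP; split.
    by apply: ge_ereal_sup => _ [g Vg <-]; rewrite lee_fin; exact: hv.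
  by apply: ereal_sup_ubound; exists v.
have Hs := hs wbar Wwbar.
exists s; split; first exact: cont_within cs.
split; first exact: hs.
split; last first.
  split; first by move=> w Ww; rewrite -(phiE _ _ Hs); exact: hmin.
  by exists wbar; rewrite (phiE _ _ Hs).
split; first by move=> a u w; rewrite mulr0 addr0.
split; first exact: cst_continuous.
move=> v.
have [v1 [w1 [Vv1 [Ww1 ->]]]] := dec v.
apply: le_ereal_inf_tmp => _ [delta /= d0 <-].
apply: ereal_sup_ge.
have d20 : 0 < delta / 2 by rewrite divr_gt0.
have [d1 d10 hd1] := cs wbar Wwbar _ d20.
have w10 : 0 < `|w1| + 1 by have := normr_ge0 w1; lra.
have v10 : 0 < 2 * (`|v1| + 1) by have := normr_ge0 v1; lra.
pose t := Num.min (delta / 2) (Num.min (d1 / (`|w1| + 1)) (delta / (2 * (`|v1| + 1)))).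
have t0 : 0 < t by rewrite !lt_min d20 !divr_gt0.
have ta : t <= delta / 2 by rewrite /t ge_min lexx.
have tb : t * (`|w1| + 1) <= d1 by rewrite -ler_pdivlMr // /t !ge_min lexx orbT.
have tc : t * (2 * (`|v1| + 1)) <= delta by rewrite -ler_pdivlMr // /t !ge_min lexx !orbT.
pose w' := t *: w1 + wbar.
have Ww' : W w' := sW.2 t w1 wbar Ww1 Wwbar.
have [Vsw' hsw'] := hs w' Ww'.
pose y := s w' + wbar - t *: v1.
exists ((Phi (y + t *: (v1 + w1)) - Phi y) / t)%:E.
  exists (y, t) => //; split.
    rewrite -ball_normE /= /y.
    have -> : s wbar + wbar - (s w' + wbar - t *: v1) = (s wbar - s w') + t *: v1.
      by rewrite opprD opprK opprD !addrA [s wbar + wbar - s w']addrAC addrK.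
    have h1 : `|wbar - w'| < d1.
      rewrite /w' opprD addrA addrAC subrr sub0r normrN normrZ ger0_norm ?ltW //.
      have := normr_ge0 w1; nra.
    have h2 := hd1 w' Ww' h1.
    apply: le_lt_trans (ler_normD _ _) _; rewrite normrZ ger0_norm ?ltW //.
    have := normr_ge0 v1; nra.
  by apply/andP; split => /=; lra.
rewrite lee_fin; apply: divr_ge0; last exact: ltW.
rewrite subr_ge0.
have e1 : y + t *: (v1 + w1) = s w' + w'.
  by rewrite /y /w' scalerDr addrA subrK addrAC addrA.
have e2 : y = (- t *: v1 + s w') + wbar by rewrite /y addrAC scaleNr [s w' - _]addrC.
have Vy : V (- t *: v1 + s w') by apply: sV.2.
apply: (@le_trans _ _ (Phi (s wbar + wbar))).
  by rewrite e2; apply: Hs.2.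
rewrite e1; have := hmin w' Ww'.
by rewrite (phiE _ _ Hs) (phiE _ _ (hs w' Ww')) lee_fin.
Qed.
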